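(* Let $p$ be a nonzero integer and let $d$ be an integer with $d \neq 0$, $d \neq -1$, such that $d$ and $d+1$ are both divisors of $2p$, and such that $2p\left(d + \frac{1}{d}\right)$, $2p\left(d + \frac{1}{d+1}\right)$ and $2p\left(\frac{1}{d} + \frac{d}{d+1}\right)$ are integers. Then $$\left\{-p - 2p\left(d + \frac{1}{d}\right)\right\}^3 + \left\{p + 2p\left(d + \frac{1}{d+1}\right)\right\}^3 + \left\{p + 2p\left(\frac{1}{d} + \frac{d}{d+1}\right)\right\}^3 = 3p^3,$$ so that $3p^3$ is represented as a sum of three integer cubes. *)

(* Defs.v *)
From mathcomp Require Import all_boot all_order all_algebra.

(* Main.v *)
Require Import Defs.
From mathcomp Require Import all_boot all_order all_algebra.
From mathcomp Require Import ring.
Import Order.TTheory GRing.Theory Num.Theory.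
Local Open Scope ring_scope.

Lemma key (x y : rat) : x != 0 -> x + 1 != 0 ->
  (- y - 2 * y * (x + x^-1)) ^+ 3
  + (y + 2 * y * (x + (x + 1)^-1)) ^+ 3
  + (y + 2 * y * (x^-1 + x / (x + 1))) ^+ 3
  = 3 * y ^+ 3.
Proof. move=> h0 h1; by field; apply/andP. Qed.

Theorem lemma3p2 (p d : int) :
  p != 0 -> d != 0 -> d != -1 ->
  (d %| 2 * p)%Z -> (d + 1 %| 2 * p)%Z ->
  (2 * p%:~R * (d%:~R + (d%:~R)^-1) : rat) \is a Num.int ->
  (2 * p%:~R * (d%:~R + (d%:~R + 1)^-1) : rat) \is a Num.int ->
  (2 * p%:~R * ((d%:~R)^-1 + d%:~R / (d%:~R + 1)) : rat) \is a Num.int ->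
  (- p%:~R - 2 * p%:~R * (d%:~R + (d%:~R)^-1)) ^+ 3
  + (p%:~R + 2 * p%:~R * (d%:~R + (d%:~R + 1)^-1)) ^+ 3
  + (p%:~R + 2 * p%:~R * ((d%:~R)^-1 + d%:~R / (d%:~R + 1))) ^+ 3
  = 3 * (p%:~R : rat) ^+ 3.
Proof.
move=> _ d0 d1 _ _ _ _ _.
have h0 : (d%:~R : rat) != 0 by rewrite intr_eq0.
have h1 : (d%:~R + 1 : rat) != 0.
  have -> : (d%:~R + 1 : rat) = (d + 1)%:~R by rewrite rmorphD /= rmorph1.
  by rewrite intr_eq0 addr_eq0.
exact: key h0 h1.
Qed.
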